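(* Let $k\in\{3,4\}$. There is a constant $C$ independent of $N$, $\lambda$ and the frequencies such that $|M_{k+2}(\xi_1,\dots,\xi_{k+2})|\le C\,|\alpha_{k+2}(\xi_1,\dots,\xi_{k+2})|$ for all $(\xi_1,\dots,\xi_{k+2})\in\Omega$.
   Context: Fix $k\in\{3,4\}$, $s\in[\tfrac12,1)$, a large parameter $N\ge1$ and a period $\lambda\ge1$. The frequency variables range over $\frac1\lambda\mathbb Z$. The multiplier $m=m_{N,s}:\mathbb R\to(0,1]$ is a smooth even function, nonincreasing in $|\xi|$, with $m(\xi)=1$ for $|\xi|\le N$ and $m(\xi)=N^{1-s}|\xi|^{s-1}$ for $|\xi|>2N$. For $n\ge2$, $\Gamma_n=\{(\xi_1,\dots,\xi_n)\in(\frac1\lambda\mathbb Z)^n:\xi_1+\dots+\xi_n=0\}$. Write $m_j=m(\xi_j)$, $\alpha_n=\xi_1^3+\dots+\xi_n^3$, $M_{k+2}=i(m_1^2\xi_1^3+\dots+m_{k+2}^2\xi_{k+2}^3)$. For a tuple of frequencies, $\xi_1^*,\xi_2^*,\dots$ denotes its rearrangement with $|\xi_1^*|\ge|\xi_2^*|\ge\cdots$; when $k=3$ set $\xi_6^*=0$. Notation: $A\lesssim B$ means $A\le CB$ with $C$ independent of $N,\lambda$ and the frequencies; $A\sim B$ means $A\lesssim B\lesssim A$; $A\ll B$ (or $B\gg A$) means $A\le C_0^{-1}B$ for a fixed sufficiently large absolute constant $C_0$. The non-resonant set is $\Omega=\Omega_1\cup\Omega_2\cup\Omega_3\cup\Omega_4\subset\Gamma_{k+2}$,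 where $\Omega_1=\{|\xi_3^*|\gg|\xi_4^*|\}$; $\Omega_2=\{|\xi_1^*|\sim|\xi_2^*|\gtrsim N\gg|\xi_3^*|\sim|\xi_4^*|,\ |{\xi_1^*}^3+{\xi_2^*}^3|\gg|{\xi_3^*}^3+\dots+{\xi_{k+2}^*}^3|\}$; $\Omega_3=\{|\xi_1^*|\gg|\xi_3^*|,\ |\xi_1^*+\xi_2^*||\xi_1^*|\gg|\xi_3^*|^2\}$; $\Omega_4=\{|\xi_4^*|\gg|\xi_5^*|,\ |\xi_1^*+\xi_2^*||\xi_1^*+\xi_3^*||\xi_1^*+\xi_4^*|\gg|\xi_5^*||\xi_1^*|^2,\ |m(\xi_1^* )^2{\xi_1^*}^3+\dots+m(\xi_4^* )^2{\xi_4^*}^3|\gg|m(\xi_5^* )^2{\xi_5^*}^3+m(\xi_6^* )^2{\xi_6^*}^3|\}$ (each set consisting of the points of $\Gamma_{k+2}$ satisfying the listed conditions). *)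

(* Defs.v *)
From Stdlib Require Import Reals Lra Lia.
Open Scope R_scope.

Fixpoint rsum (n : nat) (f : nat -> R) : R :=
  match n with
  | O => 0
  | S n' => rsum n' f + f n'
  end.

Definition smooth (f : R -> R) : Prop :=
  exists d : nat -> R -> R,
    d O = f /\ forall (j : nat) (x : R), derivable_pt_lim (d j) x (d (S j) x).

Definition admissible_profile (s : R) (mu : R -> R) : Prop :=
  smooth mu /\
  (forall x, mu (- x) = mu x) /\
  (forall x y, Rabs x <= Rabs y -> mu y <= mu x) /\
  (forall x, 0 < mu x <= 1) /\
  (forall x, Rabs x <= 1 -> mu x = 1) /\
  (forall x, 2 < Rabs x -> mu x = Rpower (Rabs x) (s - 1)).

(* m_{N,s}(xi) = mu(xi / N): then m = 1 on |xi| <= N and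
   m(xi) = N^(1-s) |xi|^(s-1) on |xi| > 2N. *)
Definition mult (mu : R -> R) (N xi : R) : R := mu (xi / N).

Definition in_Gamma (n : nat) (lam : R) (xi : nat -> R) : Prop :=
  (forall j, (j < n)%nat -> exists z : Z, xi j = IZR z / lam) /\
  rsum n xi = 0.

Definition alpha (n : nat) (xi : nat -> R) : R := rsum n (fun j => xi j ^ 3).

(* M_n / i = m_1^2 xi_1^3 + ... + m_n^2 xi_n^3  (so |M_n| = |Mreal|). *)
Definition Mreal (mu : R -> R) (N : R) (n : nat) (xi : nat -> R) : R :=
  rsum n (fun j => (mult mu N (xi j)) ^ 2 * xi j ^ 3).

Definition sorting_perm (n : nat) (xi : nat -> R) (sigma : nat -> nat) : Prop :=
  (forall i, (i < n)%nat -> (sigma i < n)%nat) /\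
  (forall i j, (i < n)%nat -> (j < n)%nat -> sigma i = sigma j -> i = j) /\
  (forall i j, (i < j)%nat -> (j < n)%nat -> Rabs (xi (sigma j)) <= Rabs (xi (sigma i))).

(* Rearranged tuple, 0-indexed: star 0 = xi_1^*, ...; entries beyond n are 0
   (so xi_6^* = 0 when n = 5). *)
Definition star (n : nat) (xi : nat -> R) (sigma : nat -> nat) (j : nat) : R :=
  if Nat.ltb j n then xi (sigma j) else 0.

(* Asymptotic relations with explicit constants:
   A ≪ B  :  A <= B / C0 ;  A ∼ B : B/K <= A <= K B ;  A ≳ B : A >= B / K. *)
Definition mll (C0 A B : R) : Prop := A <= B / C0.
Definition msim (K A B : R) : Prop := B / K <= A /\ A <= K * B.

Section Omega.
Variables (n : nat) (C0 K N : R) (mu : R -> R) (x : nat -> R).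
(* here x = star n xi sigma, 0-indexed: x 0 = xi_1^*, x 1 = xi_2^*, ... *)

Definition Omega1 : Prop := mll C0 (Rabs (x 3)) (Rabs (x 2)).

Definition Omega2 : Prop :=
  msim K (Rabs (x 0)) (Rabs (x 1)) /\
  N / K <= Rabs (x 1) /\
  mll C0 (Rabs (x 2)) N /\
  msim K (Rabs (x 2)) (Rabs (x 3)) /\
  mll C0 (Rabs (rsum (n - 2) (fun j => x (j + 2)%nat ^ 3)))
         (Rabs (x 0 ^ 3 + x 1 ^ 3)).

Definition Omega3 : Prop :=
  mll C0 (Rabs (x 2)) (Rabs (x 0)) /\
  mll C0 (Rabs (x 2) ^ 2) (Rabs (x 0 + x 1) * Rabs (x 0)).

Definition Omega4 : Prop :=
  let q := fun j => (mult mu N (x j)) ^ 2 * x j ^ 3 in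
  mll C0 (Rabs (x 4)) (Rabs (x 3)) /\
  mll C0 (Rabs (x 4) * Rabs (x 0) ^ 2)
         (Rabs (x 0 + x 1) * Rabs (x 0 + x 2) * Rabs (x 0 + x 3)) /\
  mll C0 (Rabs (q 4%nat + q 5%nat)) (Rabs (q 0%nat + q 1%nat + q 2%nat + q 3%nat)).
End Omega.

Definition in_Omega (n : nat) (C0 K N : R) (mu : R -> R) (xi : nat -> R) : Prop :=
  exists sigma, sorting_perm n xi sigma /\
    let x := star n xi sigma in
    Omega1 C0 x \/ Omega2 n C0 K N x \/ Omega3 C0 x \/ Omega4 C0 N mu x.

(* Main.v *)
From Stdlib Require Import Reals Lra Lia List Permutation.
From Coquelicot Require Import Coquelicot.
Require Import Defs.
Open Scope R_scope.


Fixpoint lsum (l : list R) : R := match l with nil => 0 | a :: t => a + lsum t end.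

Lemma lsum_app l1 l2 : lsum (l1 ++ l2) = lsum l1 + lsum l2.
Proof. induction l1; simpl; [lra|rewrite IHl1; lra]. Qed.

Lemma lsum_perm l1 l2 : Permutation l1 l2 -> lsum l1 = lsum l2.
Proof. induction 1; simpl; lra. Qed.

Lemma rsum_lsum n F : rsum n F = lsum (map F (seq 0 n)).
Proof. induction n; [reflexivity|]. cbn [rsum].
  rewrite seq_S, map_app, lsum_app, IHn. simpl. lra. Qed.

Lemma rsum_ext n F G : (forall j, (j < n)%nat -> F j = G j) -> rsum n F = rsum n G.
Proof. induction n; intros H; simpl; [reflexivity|]. rewrite IHn, H; auto; intros; apply H; lia. Qed.

Lemma rsum_perm n F sigma :
  (forall i, (i < n)%nat -> (sigma i < n)%nat) ->
  (forall i j, (i < n)%nat -> (j < n)%nat -> sigma i = sigma j -> i = j) ->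
  rsum n (fun j => F (sigma j)) = rsum n F.
Proof.
  intros H1 H2. rewrite !rsum_lsum.
  replace (map (fun j => F (sigma j)) (seq 0 n)) with (map F (map sigma (seq 0 n)))
    by (rewrite map_map; reflexivity).
  apply lsum_perm, Permutation_map, Permutation_map_same_l.
  - apply FinFun.Injective_map_NoDup_in; [|apply seq_NoDup].
    intros x y Hx Hy. apply in_seq in Hx, Hy. apply H2; lia.
  - intros z Hz. apply in_map_iff in Hz as [i [<- Hi]]. apply in_seq in Hi. apply in_seq. 
    specialize (H1 i). lia.
Qed.


Lemma local_deriv (f h : R -> R) x l d : 0 < d ->
  (forall y, Rabs (y - x) < d -> f y = h y) ->
  derivable_pt_lim h x l -> derivable_pt_lim f x l.
Proof.
  intros Hd Heq Hh eps Heps. destruct (Hh eps Heps) as [del Hdel].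
  assert (Hm : 0 < Rmin del d) by (apply Rmin_pos; [apply cond_pos|lra]).
  exists (mkposreal _ Hm). intros hh Hh0 Hhh. simpl in Hhh.
  rewrite !Heq.
  - apply Hdel; auto. eapply Rlt_le_trans; [exact Hhh|apply Rmin_l].
  - replace (x - x) with 0 by ring. rewrite Rabs_R0. lra.
  - replace (x + hh - x) with hh by ring. eapply Rlt_le_trans; [exact Hhh|apply Rmin_r].
Qed.

Definition g0 (d : nat -> R -> R) (z : R) := d 0%nat z ^ 2 * z ^ 3.
Definition G1 (d : nat -> R -> R) (z : R) :=
  2 * d 0%nat z * d 1%nat z * z ^ 3 + 3 * d 0%nat z ^ 2 * z ^ 2.
Definition G2 (d : nat -> R -> R) (z : R) :=
  2 * d 1%nat z ^ 2 * z ^ 3 + 2 * d 0%nat z * d 2%nat z * z ^ 3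
  + 12 * d 0%nat z * d 1%nat z * z ^ 2 + 6 * d 0%nat z ^ 2 * z.

Definition tower (d : nat -> R -> R) :=
  forall (j : nat) (x : R), derivable_pt_lim (d j) x (d (S j) x).

Lemma tower_is_derive d j x : tower d -> is_derive (d j) x (d (S j) x).
Proof. intros H. apply is_derive_Reals, H. Qed.

Lemma tower_Derive d j x : tower d -> Derive (d j) x = d (S j) x.
Proof. intros H. apply is_derive_unique, tower_is_derive, H. Qed.

Lemma tower_Derive' d j x : tower d -> Derive (fun y => d j y) x = d (S j) x.
Proof. intros H. apply is_derive_unique, tower_is_derive, H. Qed.

Lemma deriv_g0 d x : tower d -> derivable_pt_lim (g0 d) x (G1 d x).
Proof.
  intros H. apply is_derive_Reals. unfold g0, G1.
  auto_derive.
  - repeat split; eexists; apply tower_is_derive, H.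
  - rewrite (tower_Derive' d 0 x H). simpl. ring.
Qed.

Lemma deriv_G1 d x : tower d -> derivable_pt_lim (G1 d) x (G2 d x).
Proof.
  intros H. apply is_derive_Reals. unfold G1, G2.
  auto_derive.
  - repeat split; eexists; apply tower_is_derive, H.
  - rewrite (tower_Derive' d 0 x H), (tower_Derive' d 1 x H). simpl. ring.
Qed.


Lemma d1_small (d : nat -> R -> R) x : tower d ->
  (forall y, Rabs y <= 1 -> d 0%nat y = 1) -> Rabs x < 1 -> d 1%nat x = 0.
Proof.
  intros Ht H1 Hx. apply (uniqueness_limite (d 0%nat) x); [apply Ht|].
  apply (local_deriv _ (fct_cte 1) x 0 (1 - Rabs x)); [lra| |apply derivable_pt_lim_const].
  intros y Hy. unfold fct_cte. apply H1.
  pose proof (Rabs_triang_inv y x). pose proof (Rabs_triang (y - x) x).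
  replace (y - x + x) with y in H0 by ring. lra.
Qed.

Lemma d2_small (d : nat -> R -> R) x : tower d ->
  (forall y, Rabs y <= 1 -> d 0%nat y = 1) -> Rabs x < 1 -> d 2%nat x = 0.
Proof.
  intros Ht H1 Hx. apply (uniqueness_limite (d 1%nat) x); [apply Ht|].
  apply (local_deriv _ (fct_cte 0) x 0 (1 - Rabs x)); [lra| |apply derivable_pt_lim_const].
  intros y Hy. unfold fct_cte. apply (d1_small d); auto.
  pose proof (Rabs_triang (y - x) x).
  replace (y - x + x) with y in H by ring. lra.
Qed.

Lemma d1_big (d : nat -> R -> R) s x : tower d ->
  (forall y, 2 < Rabs y -> d 0%nat y = Rpower (Rabs y) (s - 1)) -> 2 < Rabs x ->
  d 1%nat x = (s - 1) * d 0%nat x / x.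
Proof.
  intros Ht H2 Hx. apply (uniqueness_limite (d 0%nat) x); [apply Ht|].
  destruct (Rle_or_lt 0 x) as [Hp|Hn].
  - rewrite Rabs_pos_eq in Hx by lra.
    apply (local_deriv _ (fun y => exp ((s-1) * ln y)) x _ (x - 2)); [lra| |].
    + intros y Hy. rewrite H2; unfold Rpower; [rewrite Rabs_pos_eq; [reflexivity|]|];
      apply Rabs_def2 in Hy; [lra|]. rewrite Rabs_pos_eq; lra.
    + rewrite H2 by (rewrite Rabs_pos_eq; lra). rewrite Rabs_pos_eq by lra. unfold Rpower.
      apply is_derive_Reals. auto_derive; [lra|]. field. lra.
  - rewrite Rabs_left in Hx by lra.
    apply (local_deriv _ (fun y => exp ((s-1) * ln (-y))) x _ (-x - 2)); [lra| |].
    + intros y Hy. apply Rabs_def2 in Hy. rewrite H2; unfold Rpower;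
      [rewrite Rabs_left; [reflexivity|lra]|]. rewrite Rabs_left; lra.
    + rewrite H2 by (rewrite Rabs_left; lra). rewrite Rabs_left by lra. unfold Rpower.
      apply is_derive_Reals. auto_derive; [lra|]. field. lra.
Qed.

Lemma d2_big (d : nat -> R -> R) s x : tower d ->
  (forall y, 2 < Rabs y -> d 0%nat y = Rpower (Rabs y) (s - 1)) -> 2 < Rabs x ->
  d 2%nat x = (s - 1) * (s - 2) * d 0%nat x / x ^ 2.
Proof.
  intros Ht H2 Hx.
  assert (Hx0 : x <> 0) by (intro; subst; rewrite Rabs_R0 in Hx; lra).
  apply (uniqueness_limite (d 1%nat) x); [apply Ht|].
  apply (local_deriv _ (fun y => (s - 1) * d 0%nat y / y) x _ (Rabs x - 2)); [lra| |].
  - intros y Hy. apply (d1_big d s); auto.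
    pose proof (Rabs_triang_inv x y). rewrite <- Rabs_Ropp in Hy.
    replace (- (y - x)) with (x - y) in Hy by ring. lra.
  - apply is_derive_Reals. auto_derive.
    + split; [eexists; apply tower_is_derive, Ht|]. split; auto.
    + rewrite (tower_Derive' d 0 x Ht). rewrite (d1_big d s x); auto. field. auto.
Qed.


Lemma Rabs_le_inv' x a : Rabs x <= a -> -a <= x <= a.
Proof. unfold Rabs; destruct Rcase_abs; lra. Qed.

Lemma bnd_d d j : tower d -> exists B, 0 <= B /\ forall c, -2 <= c <= 2 -> Rabs (d j c) <= B.
Proof.
  intros Ht.
  assert (Hc : forall c, -2 <= c <= 2 -> continuity_pt (d j) c).
  { intros c _. apply derivable_continuous_pt. exists (d (S j) c). apply Ht. }
  destruct (continuity_ab_maj (d j) (-2) 2 ltac:(lra) Hc) as [M [HM _]].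
  destruct (continuity_ab_min (d j) (-2) 2 ltac:(lra) Hc) as [m [Hm _]].
  exists (Rabs (d j M) + Rabs (d j m)). split.
  - pose proof (Rabs_pos (d j M)); pose proof (Rabs_pos (d j m)); lra.
  - intros c Hcc. specialize (HM c Hcc). specialize (Hm c Hcc).
    pose proof (Rle_abs (d j M)). pose proof (Rle_abs (- d j m)). rewrite Rabs_Ropp in H0.
    pose proof (Rabs_pos (d j M)); pose proof (Rabs_pos (d j m)).
    apply Rabs_le; lra.
Qed.

Lemma G2_mid_bound u v w z B1 B2 : 0 < u <= 1 -> Rabs v <= B1 -> Rabs w <= B2 -> 1 <= Rabs z <= 2 ->
  Rabs (2 * v ^ 2 * z ^ 3 + 2 * u * w * z ^ 3 + 12 * u * v * z ^ 2 + 6 * u ^ 2 * z)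
  <= (8 * B1 ^ 2 + 8 * B2 + 24 * B1 + 6) * Rabs z.
Proof.
  intros Hu Hv Hw Hz.
  eapply Rle_trans; [apply Rabs_triang|].
  eapply Rle_trans; [apply Rplus_le_compat_r, Rabs_triang|].
  eapply Rle_trans; [apply Rplus_le_compat_r, Rplus_le_compat_r, Rabs_triang|].
  rewrite !Rabs_mult, <- !RPow_abs, !(Rabs_pos_eq 2), !(Rabs_pos_eq 12), !(Rabs_pos_eq 6), (Rabs_pos_eq u) by lra.
  set (a := Rabs z) in *. set (b := Rabs v) in *. set (c := Rabs w) in *.
  assert (0 <= b) by apply Rabs_pos. assert (0 <= c) by apply Rabs_pos.
  assert (b ^ 2 <= B1 ^ 2) by (apply pow_incr; lra).
  assert (a ^ 2 <= 2 * a) by (simpl; nra). assert (a ^ 3 <= 4 * a) by (simpl; nra).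
  assert (u * c <= c) by (rewrite <- (Rmult_1_l c) at 2; apply Rmult_le_compat_r; lra).
  assert (u * b <= b) by (rewrite <- (Rmult_1_l b) at 2; apply Rmult_le_compat_r; lra).
  assert (0 <= u * c) by nra. assert (0 <= u * b) by nra.
  assert (0 <= a ^ 3) by (apply pow_le; lra). assert (0 <= a ^ 2) by (apply pow_le; lra).
  assert (0 <= b ^ 2) by (apply pow_le; lra).
  set (a3 := a ^ 3) in *. set (a2 := a ^ 2) in *. set (uc := u * c) in *. set (ub := u * b) in *.
  set (b2 := b ^ 2) in *. set (B12 := B1 ^ 2) in *.
  assert (2 * b2 * a3 <= 8 * B12 * a) by nra.
  assert (2 * uc * a3 <= 8 * B2 * a) by nra.
  assert (12 * ub * a2 <= 24 * B1 * a) by nra.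
  replace (2 * u * c * a3) with (2 * uc * a3) by (unfold uc; ring).
  replace (12 * u * b * a2) with (12 * ub * a2) by (unfold ub; ring).
  assert (u ^ 2 <= 1) by (simpl; nra). assert (6 * u ^ 2 * a <= 6 * a) by nra.
  lra.
Qed.

Lemma G2_bound d s : tower d -> 1/2 <= s < 1 ->
  (forall y, 0 < d 0%nat y <= 1) ->
  (forall y, Rabs y <= 1 -> d 0%nat y = 1) ->
  (forall y, 2 < Rabs y -> d 0%nat y = Rpower (Rabs y) (s - 1)) ->
  exists Cg, 6 <= Cg /\ forall z, Rabs (G2 d z) <= Cg * Rabs z.
Proof.
  intros Ht Hs Hpos H1 H2.
  destruct (bnd_d d 1 Ht) as [B1 [HB1 HB1']].
  destruct (bnd_d d 2 Ht) as [B2 [HB2 HB2']].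
  exists (8 * B1 ^ 2 + 8 * B2 + 24 * B1 + 6). split; [nra|].
  intros z. destruct (Rlt_or_le (Rabs z) 1) as [Hz1|Hz1].
  - unfold G2. rewrite (d1_small d z), (d2_small d z), H1 by (auto; lra).
    replace (2 * 0 ^ 2 * z ^ 3 + 2 * 1 * 0 * z ^ 3 + 12 * 1 * 0 * z ^ 2 + 6 * 1 ^ 2 * z) with (6 * z) by ring.
    rewrite Rabs_mult, (Rabs_pos_eq 6) by lra. pose proof (Rabs_pos z). nra.
  - destruct (Rlt_or_le 2 (Rabs z)) as [Hz2|Hz2].
    + assert (Hz0 : z <> 0) by (intro; subst; rewrite Rabs_R0 in Hz2; lra).
      unfold G2. rewrite (d1_big d s z), (d2_big d s z) by auto.
      set (u := d 0%nat z).
      replace (2 * ((s - 1) * u / z) ^ 2 * z ^ 3 + 2 * u * ((s - 1) * (s - 2) * u / z ^ 2) * z ^ 3 +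
        12 * u * ((s - 1) * u / z) * z ^ 2 + 6 * u ^ 2 * z)
        with ((u ^ 2 * (4 * (s-1) ^ 2 + 10 * (s - 1) + 6)) * z) by (field; auto).
      rewrite Rabs_mult. pose proof (Rabs_pos z). specialize (Hpos z). fold u in Hpos.
      assert (Hc0 : 0 <= 4 * (s - 1) ^ 2 + 10 * (s - 1) + 6) by (simpl; nra).
      assert (Hc1 : 4 * (s - 1) ^ 2 + 10 * (s - 1) + 6 <= 6) by (simpl; nra).
      assert (Hu2 : 0 <= u ^ 2 <= 1) by (simpl; split; nra).
      rewrite Rabs_pos_eq by nra.
      assert (u ^ 2 * (4 * (s - 1) ^ 2 + 10 * (s - 1) + 6) <= 6) by nra. nra.
    + unfold G2. apply G2_mid_bound; auto.
      * apply HB1'. apply Rabs_le_inv' in Hz2. lra.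
      * apply HB2'. apply Rabs_le_inv' in Hz2. lra.
Qed.


Lemma between_abs a b c : a <= c <= b -> Rabs c <= Rmax (Rabs a) (Rabs b).
Proof.
  intros H. unfold Rmax; destruct Rle_dec; unfold Rabs in *;
  repeat destruct Rcase_abs; lra.
Qed.

Lemma Rmax_abs_le a b : Rmax (Rabs a) (Rabs b) <= Rabs a + Rabs b.
Proof. pose proof (Rabs_pos a); pose proof (Rabs_pos b). unfold Rmax; destruct Rle_dec; lra. Qed.

Lemma Rmax_abs_shift a b : Rmax (Rabs a) (Rabs (a + b)) <= Rabs a + Rabs b.
Proof. pose proof (Rabs_pos a); pose proof (Rabs_pos b); pose proof (Rabs_triang a b).
  unfold Rmax; destruct Rle_dec; lra. Qed.

Lemma mvt_any (f f' : R -> R) : (forall c, derivable_pt_lim f c (f' c)) ->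
  forall a b, exists c, f b - f a = f' c * (b - a) /\ Rabs c <= Rmax (Rabs a) (Rabs b).
Proof.
  intros Hd a b. destruct (Rtotal_order a b) as [Hab|[Hab|Hab]].
  - destruct (MVT_cor2 f f' a b Hab (fun c _ => Hd c)) as [c [Hc1 Hc2]].
    exists c. split; auto. apply between_abs. lra.
  - subst. exists b. split; [ring|]. unfold Rmax; destruct Rle_dec; lra.
  - destruct (MVT_cor2 f f' b a Hab (fun c _ => Hd c)) as [c [Hc1 Hc2]].
    exists c. split; [lra|]. rewrite Rmax_comm. apply between_abs. lra.
Qed.

Lemma shift_deriv (f : R -> R) x l D : derivable_pt_lim f (x + D) l ->
  derivable_pt_lim (fun y => f (y + D)) x l.
Proof.
  intros H eps Heps. destruct (H eps Heps) as [del Hdel]. exists del.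
  intros h Hh Hhd. replace (x + h + D) with (x + D + h) by ring. apply Hdel; auto.
Qed.

Lemma G1_zero d : G1 d 0 = 0.
Proof. unfold G1. ring. Qed.

Lemma G1_bound d Cg : tower d -> 0 <= Cg -> (forall z, Rabs (G2 d z) <= Cg * Rabs z) ->
  forall z, Rabs (G1 d z) <= Cg * Rabs z ^ 2.
Proof.
  intros Ht HC HG z.
  destruct (mvt_any (G1 d) (G2 d) (fun c => deriv_G1 d c Ht) 0 z) as [c [Hc1 Hc2]].
  rewrite G1_zero, Rminus_0_r, Rminus_0_r in Hc1. rewrite Hc1, Rabs_mult.
  rewrite Rabs_R0 in Hc2. assert (Rabs c <= Rabs z).
  { unfold Rmax in Hc2; destruct Rle_dec; pose proof (Rabs_pos c); pose proof (Rabs_pos z); lra. }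
  pose proof (HG c). pose proof (Rabs_pos c). pose proof (Rabs_pos z). pose proof (Rabs_pos (G2 d c)).
  assert (Rabs (G2 d c) <= Cg * Rabs z).
  { eapply Rle_trans; [eassumption|]. apply Rmult_le_compat_l; auto. }
  replace (Cg * Rabs z ^ 2) with ((Cg * Rabs z) * Rabs z) by ring.
  apply Rmult_le_compat_r; auto.
Qed.

Lemma g_lip d Cg : tower d -> 0 <= Cg -> (forall z, Rabs (G2 d z) <= Cg * Rabs z) ->
  forall a b, Rabs (g0 d a - g0 d b) <= Cg * Rabs (a - b) * (Rabs a + Rabs b) ^ 2.
Proof.
  intros Ht HC HG a b.
  destruct (mvt_any (g0 d) (G1 d) (fun c => deriv_g0 d c Ht) b a) as [c [Hc1 Hc2]].
  rewrite Hc1, Rabs_mult. pose proof (Rmax_abs_le b a).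
  pose proof (G1_bound d Cg Ht HC HG c). pose proof (Rabs_pos c).
  pose proof (Rabs_pos a). pose proof (Rabs_pos b). pose proof (Rabs_pos (a - b)).
  assert (Rabs c ^ 2 <= (Rabs a + Rabs b) ^ 2) by (apply pow_incr; lra).
  assert (Rabs (G1 d c) <= Cg * (Rabs a + Rabs b) ^ 2).
  { eapply Rle_trans; [eassumption|]. apply Rmult_le_compat_l; auto. }
  pose proof (Rabs_pos (G1 d c)).
  set (P := (Rabs a + Rabs b) ^ 2) in *. nra.
Qed.

Lemma g_dd d Cg : tower d -> 0 <= Cg -> (forall z, Rabs (G2 d z) <= Cg * Rabs z) ->
  forall p D E, Rabs (g0 d p - g0 d (p + D) - g0 d (p + E) + g0 d (p + D + E))
    <= Cg * Rabs D * Rabs E * (Rabs p + Rabs D + Rabs E).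
Proof.
  intros Ht HC HG p D E.
  set (phi := fun y => g0 d (y + D) - g0 d y).
  assert (Hphi : forall c, derivable_pt_lim phi c (G1 d (c + D) - G1 d c)).
  { intros c. apply derivable_pt_lim_minus.
    - apply shift_deriv, deriv_g0, Ht.
    - apply deriv_g0, Ht. }
  destruct (mvt_any phi _ Hphi p (p + E)) as [c [Hc1 Hc2]].
  destruct (mvt_any (G1 d) (G2 d) (fun c => deriv_G1 d c Ht) c (c + D)) as [c' [Hc3 Hc4]].
  unfold phi in Hc1.
  replace (g0 d p - g0 d (p + D) - g0 d (p + E) + g0 d (p + D + E))
    with (g0 d (p + E + D) - g0 d (p + E) - (g0 d (p + D) - g0 d p))
    by (replace (p + E + D) with (p + D + E) by ring; ring).
  rewrite Hc1, Hc3. replace (c + D - c) with D by ring. replace (p + E - p) with E by ring.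
  rewrite !Rabs_mult.
  pose proof (Rmax_abs_shift c D). pose proof (Rmax_abs_shift p E).
  pose proof (Rabs_triang c D). pose proof (Rabs_triang p E).
  pose proof (HG c').
  assert (Hc' : Rabs c' <= Rabs p + Rabs D + Rabs E) by lra.
  pose proof (Rabs_pos c'). pose proof (Rabs_pos D). pose proof (Rabs_pos E).
  pose proof (Rabs_pos (G2 d c')).
  assert (Rabs (G2 d c') <= Cg * (Rabs p + Rabs D + Rabs E)).
  { eapply Rle_trans; [eassumption|]. apply Rmult_le_compat_l; auto. }
  set (Q := Rabs p + Rabs D + Rabs E) in *.
  assert (0 <= Rabs D * Rabs E) by nra. nra.
Qed.


Definition fN (mu : R -> R) (N u : R) := mult mu N u ^ 2 * u ^ 3.

Lemma fN_scale mu d N u : d 0%nat = mu -> N <> 0 -> fN mu N u = N ^ 3 * g0 d (u / N).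
Proof. intros H HN. unfold fN, g0, mult. rewrite H. field. auto. Qed.

Lemma Rabs_Nmul N a : 0 < N -> Rabs (N * a) = N * Rabs a.
Proof. intros. rewrite Rabs_mult, Rabs_pos_eq by lra. reflexivity. Qed.

Lemma fN_lip mu d N Cg : tower d -> d 0%nat = mu -> 0 < N -> 0 <= Cg ->
  (forall z, Rabs (G2 d z) <= Cg * Rabs z) ->
  forall u v, Rabs (fN mu N u - fN mu N v) <= Cg * Rabs (u - v) * (Rabs u + Rabs v) ^ 2.
Proof.
  intros Ht Hd HN HC HG u v.
  rewrite (fN_scale mu d N u), (fN_scale mu d N v) by (auto; lra).
  pose proof (g_lip d Cg Ht HC HG (u / N) (v / N)) as Hg.
  set (a := u / N) in *. set (b := v / N) in *.
  replace (N ^ 3 * g0 d a - N ^ 3 * g0 d b) with (N ^ 3 * (g0 d a - g0 d b)) by ring.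
  replace (u - v) with (N * (a - b)) by (unfold a, b; field; lra).
  replace u with (N * a) by (unfold a; field; lra).
  replace v with (N * b) by (unfold b; field; lra).
  rewrite !(Rabs_Nmul N) by lra. rewrite (Rabs_mult (N ^ 3)), (Rabs_pos_eq (N ^ 3)) by (apply pow_le; lra).
  replace (Cg * (N * Rabs (a - b)) * (N * Rabs a + N * Rabs b) ^ 2)
    with (N ^ 3 * (Cg * Rabs (a - b) * (Rabs a + Rabs b) ^ 2)) by ring.
  apply Rmult_le_compat_l; auto. apply pow_le; lra.
Qed.

Lemma fN_dd mu d N Cg : tower d -> d 0%nat = mu -> 0 < N -> 0 <= Cg ->
  (forall z, Rabs (G2 d z) <= Cg * Rabs z) ->
  forall p D E, Rabs (fN mu N p - fN mu N (p + D) - fN mu N (p + E) + fN mu N (p + D + E))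
    <= Cg * Rabs D * Rabs E * (Rabs p + Rabs D + Rabs E).
Proof.
  intros Ht Hd HN HC HG p D E.
  rewrite !(fN_scale mu d N) by (auto; lra).
  pose proof (g_dd d Cg Ht HC HG (p / N) (D / N) (E / N)) as Hg.
  replace ((p + D) / N) with (p / N + D / N) by (field; lra).
  replace ((p + E) / N) with (p / N + E / N) by (field; lra).
  replace ((p + D + E) / N) with (p / N + D / N + E / N) by (field; lra).
  set (a := p / N) in *. set (b := D / N) in *. set (c := E / N) in *.
  replace p with (N * a) by (unfold a; field; lra).
  replace D with (N * b) by (unfold b; field; lra).
  replace E with (N * c) by (unfold c; field; lra).
  replace (N ^ 3 * g0 d a - N ^ 3 * g0 d (a + b) - N ^ 3 * g0 d (a + c) + N ^ 3 * g0 d (a + b + c))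
    with (N ^ 3 * (g0 d a - g0 d (a + b) - g0 d (a + c) + g0 d (a + b + c))) by ring.
  rewrite !(Rabs_Nmul N) by lra. rewrite (Rabs_mult (N ^ 3)), (Rabs_pos_eq (N ^ 3)) by (apply pow_le; lra).
  replace (Cg * (N * Rabs b) * (N * Rabs c) * (N * Rabs a + N * Rabs b + N * Rabs c))
    with (N ^ 3 * (Cg * Rabs b * Rabs c * (Rabs a + Rabs b + Rabs c))) by ring.
  apply Rmult_le_compat_l; auto. apply pow_le; lra.
Qed.

Lemma fN_odd mu N u : (forall x, mu (- x) = mu x) -> fN mu N (- u) = - fN mu N u.
Proof. intros H. unfold fN, mult. replace (- u / N) with (- (u / N)) by (unfold Rdiv; ring).
  rewrite H. ring. Qed.

Lemma fN_cube mu N u : 0 < N -> (forall x, Rabs x <= 1 -> mu x = 1) -> Rabs u <= N -> fN mu N u = u ^ 3.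
Proof. intros HN H Hu. unfold fN, mult. rewrite H; [ring|].
  unfold Rdiv. rewrite Rabs_mult, Rabs_inv, (Rabs_pos_eq N) by lra.
  apply (Rmult_le_reg_r N); [lra|]. field_simplify; lra. Qed.




Lemma abs_ge_inv x a : a <= Rabs x -> a <= x \/ x <= -a.
Proof. unfold Rabs; destruct Rcase_abs; lra. Qed.

Lemma cube_abs y : Rabs (y ^ 3) = Rabs y ^ 3.
Proof. rewrite <- RPow_abs. reflexivity. Qed.

Lemma cube_sum_lb y0 y1 : Rabs (y0 + y1) * (Rabs y0 + Rabs y1) ^ 2 / 4 <= Rabs (y0 ^ 3 + y1 ^ 3).
Proof.
  replace (y0 ^ 3 + y1 ^ 3) with ((y0 + y1) * (y0 ^ 2 - y0 * y1 + y1 ^ 2)) by ring.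
  rewrite Rabs_mult.
  assert (HQ : (Rabs y0 + Rabs y1) ^ 2 / 4 <= y0 ^ 2 - y0 * y1 + y1 ^ 2).
  { assert ((Rabs y0 + Rabs y1) ^ 2 <= 2 * (y0 ^ 2 + y1 ^ 2)).
    { rewrite <- (pow2_abs y0), <- (pow2_abs y1).
      pose proof (pow2_ge_0 (Rabs y0 - Rabs y1)). simpl in *. nra. }
    pose proof (pow2_ge_0 (y0 - y1)). simpl in *. nra. }
  rewrite (Rabs_pos_eq (y0 ^ 2 - y0 * y1 + y1 ^ 2)).
  - pose proof (Rabs_pos (y0 + y1)). unfold Rdiv in *. nra.
  - pose proof (pow2_ge_0 (Rabs y0 + Rabs y1)). lra.
Qed.

Section Core.
Variables (f : R -> R) (Cg : R).
Hypothesis HC : 0 <= Cg.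
Hypothesis Hodd : forall u, f (- u) = - f u.
Hypothesis Hlip : forall u v, Rabs (f u - f v) <= Cg * Rabs (u - v) * (Rabs u + Rabs v) ^ 2.
Hypothesis Hdd : forall p D E, Rabs (f p - f (p + D) - f (p + E) + f (p + D + E))
    <= Cg * Rabs D * Rabs E * (Rabs p + Rabs D + Rabs E).

Lemma f0 : f 0 = 0.
Proof. pose proof (Hodd 0). rewrite Ropp_0 in H. lra. Qed.

Lemma f_cub u : Rabs (f u) <= Cg * Rabs u ^ 3.
Proof. pose proof (Hlip u 0). rewrite f0, !Rminus_0_r, Rabs_R0, Rplus_0_r in H.
  eapply Rle_trans; [exact H|]. right. simpl. ring. Qed.

Lemma f_pair u v : Rabs (f u + f v) <= Cg * Rabs (u + v) * (Rabs u + Rabs v) ^ 2.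
Proof. pose proof (Hlip u (- v)). rewrite Hodd, Rabs_Ropp in H.
  replace (f u - - f v) with (f u + f v) in H by ring.
  replace (u - - v) with (u + v) in H by ring. exact H. Qed.

End Core.


Section C.
Variables (f : R -> R) (Cg : R).
Hypothesis HC : 0 <= Cg.
Hypothesis Hodd : forall u, f (- u) = - f u.
Hypothesis Hlip : forall u v, Rabs (f u - f v) <= Cg * Rabs (u - v) * (Rabs u + Rabs v) ^ 2.

Lemma case2 (N y0 y1 y2 y3 y4 y5 : R) :
  (forall u, Rabs u <= N -> f u = u ^ 3) ->
  Rabs y3 <= Rabs y2 -> Rabs y4 <= Rabs y3 -> Rabs y5 <= Rabs y4 ->
  Rabs y2 <= N ->
  Rabs (y2 ^ 3 + y3 ^ 3 + y4 ^ 3 + y5 ^ 3) <= Rabs (y0 ^ 3 + y1 ^ 3) / 100 ->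
  Rabs (f y0 + f y1 + f y2 + f y3 + f y4 + f y5)
    <= (40 * Cg + 2) * Rabs (y0 ^ 3 + y1 ^ 3 + y2 ^ 3 + y3 ^ 3 + y4 ^ 3 + y5 ^ 3).
Proof.
  intros Hcube H3 H4 H5 H2 HR.
  rewrite (Hcube y2), (Hcube y3), (Hcube y4), (Hcube y5) by lra.
  pose proof (f_pair f Cg Hodd Hlip y0 y1) as HP.
  pose proof (cube_sum_lb y0 y1) as HT.
  set (T := y0 ^ 3 + y1 ^ 3) in *. set (R0 := y2 ^ 3 + y3 ^ 3 + y4 ^ 3 + y5 ^ 3) in *.
  set (X := Rabs (y0 + y1) * (Rabs y0 + Rabs y1) ^ 2) in *.
  assert (HX : Cg * Rabs (y0 + y1) * (Rabs y0 + Rabs y1) ^ 2 = Cg * X) by (unfold X; ring).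
  rewrite HX in HP.
  replace (f y0 + f y1 + y2 ^ 3 + y3 ^ 3 + y4 ^ 3 + y5 ^ 3) with ((f y0 + f y1) + R0) by (unfold R0; ring).
  replace (y0 ^ 3 + y1 ^ 3 + y2 ^ 3 + y3 ^ 3 + y4 ^ 3 + y5 ^ 3) with (T + R0) by (unfold T, R0; ring).
  assert (HCX : Cg * X <= Cg * (4 * Rabs T)) by (apply Rmult_le_compat_l; lra).
  pose proof (Rabs_triang (f y0 + f y1) R0).
  pose proof (Rabs_triang (T + R0) (- R0)). rewrite Rabs_Ropp in H0.
  replace (T + R0 + - R0) with T in H0 by ring.
  pose proof (Rabs_pos T). pose proof (Rabs_pos (T + R0)).
  assert (Cg * Rabs T <= Cg * (100/99 * Rabs (T + R0))) by (apply Rmult_le_compat_l; lra).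
  assert (0 <= Cg * Rabs (T + R0)) by (apply Rmult_le_pos; lra).
  replace (T + y2 ^ 3 + y3 ^ 3 + y4 ^ 3 + y5 ^ 3) with (T + R0) by (unfold R0; ring). lra.
Qed.

Lemma case3 (y0 y1 y2 y3 y4 y5 : R) :
  Rabs y1 <= Rabs y0 -> Rabs y2 <= Rabs y1 ->
  Rabs y3 <= Rabs y2 -> Rabs y4 <= Rabs y3 -> Rabs y5 <= Rabs y4 ->
  Rabs y2 <= Rabs y0 / 100 ->
  Rabs y2 ^ 2 <= Rabs (y0 + y1) * Rabs y0 / 100 ->
  Rabs (f y0 + f y1 + f y2 + f y3 + f y4 + f y5)
    <= (40 * Cg + 2) * Rabs (y0 ^ 3 + y1 ^ 3 + y2 ^ 3 + y3 ^ 3 + y4 ^ 3 + y5 ^ 3).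
Proof.
  intros H1 H2 H3 H4 H5 Ha Hb.
  pose proof (f_pair f Cg Hodd Hlip y0 y1) as HP.
  pose proof (cube_sum_lb y0 y1) as HT.
  set (a0 := Rabs y0) in *. set (a1 := Rabs y1) in *. set (a2 := Rabs y2) in *.
  set (d := Rabs (y0 + y1)) in *.
  assert (0 <= a2) by apply Rabs_pos. assert (0 <= d) by apply Rabs_pos.
  assert (0 <= Rabs y5) by apply Rabs_pos.
  set (X := d * a0 ^ 2).
  assert (HX0 : 0 <= X) by (unfold X; apply Rmult_le_pos; [lra|apply pow2_ge_0]).
  assert (Hs : (a0 + a1) ^ 2 <= 4 * a0 ^ 2) by (simpl; nra).
  assert (Hs' : a0 ^ 2 <= (a0 + a1) ^ 2) by (simpl; nra).
  assert (HP' : Rabs (f y0 + f y1) <= 4 * Cg * X).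
  { eapply Rle_trans; [exact HP|]. unfold X.
    replace (4 * Cg * (d * a0 ^ 2)) with (Cg * d * (4 * a0 ^ 2)) by ring.
    apply Rmult_le_compat_l; [nra|exact Hs]. }
  assert (HT' : X / 4 <= Rabs (y0 ^ 3 + y1 ^ 3)).
  { eapply Rle_trans; [|exact HT]. unfold X. unfold Rdiv.
    apply Rmult_le_compat_r; [lra|]. apply Rmult_le_compat_l; auto. }
  assert (Hc : a2 ^ 3 <= X / 10000).
  { unfold X. replace (a2 ^ 3) with (a2 * a2 ^ 2) by ring.
    assert (Hq : a2 * a2 ^ 2 <= (a0 / 100) * (d * a0 / 100)).
    { apply Rmult_le_compat; auto. apply pow2_ge_0. }
    eapply Rle_trans; [exact Hq|]. right. field. }
  assert (Hj : forall y, Rabs y <= a2 -> Rabs (y ^ 3) <= X / 10000 /\ Rabs (f y) <= Cg * (X / 10000)).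
  { intros y Hy. rewrite cube_abs. assert (Rabs y ^ 3 <= a2 ^ 3) by (apply pow_incr; split; [apply Rabs_pos|auto]).
    split; [lra|]. eapply Rle_trans; [apply (f_cub f Cg Hodd Hlip)|]. apply Rmult_le_compat_l; lra. }
  destruct (Hj y2 (Rle_refl _)) as [A2 B2]. destruct (Hj y3 ltac:(lra)) as [A3 B3].
  destruct (Hj y4 ltac:(lra)) as [A4 B4]. destruct (Hj y5 ltac:(lra)) as [A5 B5].
  apply Rabs_le_inv' in A2, A3, A4, A5, B2, B3, B4, B5, HP'.
  assert (HS : Rabs (y0 ^ 3 + y1 ^ 3 + y2 ^ 3 + y3 ^ 3 + y4 ^ 3 + y5 ^ 3) >= X / 5).
  { pose proof (Rle_abs (y0 ^ 3 + y1 ^ 3 + y2 ^ 3 + y3 ^ 3 + y4 ^ 3 + y5 ^ 3)) as Q1.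
    pose proof (Rle_abs (- (y0 ^ 3 + y1 ^ 3 + y2 ^ 3 + y3 ^ 3 + y4 ^ 3 + y5 ^ 3))) as Q2.
    rewrite Rabs_Ropp in Q2.
    destruct (abs_ge_inv _ _ HT'); lra. }
  apply Rabs_le. 
  assert (Cg * X <= Cg * (5 * Rabs (y0 ^ 3 + y1 ^ 3 + y2 ^ 3 + y3 ^ 3 + y4 ^ 3 + y5 ^ 3)))
    by (apply Rmult_le_compat_l; lra).
  set (Z := Rabs (y0 ^ 3 + y1 ^ 3 + y2 ^ 3 + y3 ^ 3 + y4 ^ 3 + y5 ^ 3)) in *.
  assert (0 <= Cg * Z) by (apply Rmult_le_pos; [lra|unfold Z; apply Rabs_pos]).
  split; nra.
Qed.

End C.


Lemma abs_lower x L : L <= x \/ x <= - L -> L <= Rabs x.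
Proof. unfold Rabs; destruct Rcase_abs; lra. Qed.

Lemma mul3_le a b c a' b' c' : 0 <= a <= a' -> 0 <= b <= b' -> 0 <= c <= c' -> a * b * c <= a' * b' * c'.
Proof. intros. apply Rmult_le_compat; try apply Rmult_le_compat; try apply Rmult_le_pos; lra. Qed.

Section C.
Variables (f : R -> R) (Cg : R).
Hypothesis HC : 0 <= Cg.
Hypothesis Hodd : forall u, f (- u) = - f u.
Hypothesis Hlip : forall u v, Rabs (f u - f v) <= Cg * Rabs (u - v) * (Rabs u + Rabs v) ^ 2.
Hypothesis Hdd : forall p D E, Rabs (f p - f (p + D) - f (p + E) + f (p + D + E))
    <= Cg * Rabs D * Rabs E * (Rabs p + Rabs D + Rabs E).

Lemma case1 (y0 y1 y2 y3 y4 y5 : R) :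
  Rabs y1 <= Rabs y0 -> Rabs y2 <= Rabs y1 ->
  Rabs y3 <= Rabs y2 -> Rabs y4 <= Rabs y3 -> Rabs y5 <= Rabs y4 ->
  y0 + y1 + y2 + y3 + y4 + y5 = 0 ->
  Rabs y3 <= Rabs y2 / 100 ->
  Rabs (f y0 + f y1 + f y2 + f y3 + f y4 + f y5)
    <= (40 * Cg + 2) * Rabs (y0 ^ 3 + y1 ^ 3 + y2 ^ 3 + y3 ^ 3 + y4 ^ 3 + y5 ^ 3).
Proof.
  intros H1 H2 H3 H4 H5 Hsum Ha.
  set (e := y3 + y4 + y5). set (c0 := - (y0 + y1)).
  assert (Hyc : y2 - c0 = - e) by (unfold c0, e; lra).
  pose proof (Rabs_pos y0). pose proof (Rabs_pos y1). pose proof (Rabs_pos y2).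
  pose proof (Rabs_pos y3). pose proof (Rabs_pos y4). pose proof (Rabs_pos y5).
  set (a0 := Rabs y0) in *. set (a1 := Rabs y1) in *. set (a2 := Rabs y2) in *.
  assert (He : Rabs e <= 3 * a2 / 100).
  { unfold e. pose proof (Rabs_triang (y3 + y4) y5). pose proof (Rabs_triang y3 y4). lra. }
  assert (Hc0 : a2 - Rabs e <= Rabs c0 <= a2 + Rabs e).
  { replace c0 with (y2 + e) by lra. pose proof (Rabs_triang y2 e) as T1.
    pose proof (Rabs_triang (y2 + e) (- e)) as T2. rewrite Rabs_Ropp in T2.
    replace (y2 + e + - e) with y2 in T2 by ring. fold a2 in T1; fold a2 in T2; lra. }
  pose proof (Rabs_pos c0). pose proof (Rabs_pos e).
  set (P := a0 * a1 * a2).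
  assert (HP0 : 0 <= P) by (unfold P; apply Rmult_le_pos; [apply Rmult_le_pos|]; lra).
  assert (Ha23 : a2 ^ 3 <= P) by (unfold P; replace (a2 ^ 3) with (a2 * a2 * a2) by ring;
    apply mul3_le; lra).
  assert (HT1 : Rabs (f y0 + f y1 + f c0) <= 8 * Cg * P).
  { pose proof (Hdd y0 y1 c0) as Hd.
    replace (y0 + y1) with (- c0) in Hd by (unfold c0; ring).
    replace (y0 + c0) with (- y1) in Hd by (unfold c0; ring).
    replace (- c0 + c0) with 0 in Hd by ring.
    rewrite !Hodd, f0 in Hd by auto.
    replace (f y0 - - f c0 - - f y1 + 0) with (f y0 + f y1 + f c0) in Hd by ring.
    eapply Rle_trans; [exact Hd|]. fold a0 a1.
    replace (8 * Cg * P) with (Cg * (a1 * (2 * a2) * (4 * a0))) by (unfold P; ring).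
    replace (Cg * a1 * Rabs c0 * (a0 + a1 + Rabs c0)) with (Cg * (a1 * Rabs c0 * (a0 + a1 + Rabs c0))) by ring.
    apply Rmult_le_compat_l; auto. apply mul3_le; lra. }
  assert (HT2 : Rabs (f y2 - f c0) <= Cg * P).
  { eapply Rle_trans; [apply Hlip|]. rewrite Hyc, Rabs_Ropp. fold a2.
    replace (Cg * Rabs e * (a2 + Rabs c0) ^ 2) with (Cg * (Rabs e * (a2 + Rabs c0) ^ 2)) by ring.
    apply Rmult_le_compat_l; auto.
    assert ((a2 + Rabs c0) ^ 2 <= (3 * a2) ^ 2) by (apply pow_incr; lra).
    assert (Rabs e * (a2 + Rabs c0) ^ 2 <= (3 * a2 / 100) * (3 * a2) ^ 2).
    { apply Rmult_le_compat; auto. apply pow2_ge_0. }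
    eapply Rle_trans; [eassumption|]. replace (3 * a2 / 100 * (3 * a2) ^ 2) with (27/100 * a2 ^ 3) by field.
    lra. }
  assert (Hj : forall y, Rabs y <= Rabs y3 -> Rabs (f y) <= Cg * P /\ Rabs (y ^ 3) <= P / 100).
  { intros y Hy. pose proof (Rabs_pos y).
    assert (Hy3 : Rabs y ^ 3 <= a2 / 100 * a2 ^ 2).
    { replace (Rabs y ^ 3) with (Rabs y * Rabs y ^ 2) by ring. apply Rmult_le_compat; try lra.
      apply pow2_ge_0. apply pow_incr; lra. }
    split.
    - eapply Rle_trans; [apply (f_cub f Cg Hodd Hlip)|]. apply Rmult_le_compat_l; auto.
      replace (a2 / 100 * a2 ^ 2) with (a2 ^ 3 / 100) in Hy3 by field. lra.
    - rewrite cube_abs. replace (a2 / 100 * a2 ^ 2) with (a2 ^ 3 / 100) in Hy3 by field. lra. }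
  destruct (Hj y3 (Rle_refl _)) as [F3 C3]. destruct (Hj y4 ltac:(lra)) as [F4 C4].
  destruct (Hj y5 ltac:(lra)) as [F5 C5].
  assert (HQ : Rabs (y2 ^ 3 - c0 ^ 3) <= 21 / 100 * P).
  { replace (y2 ^ 3 - c0 ^ 3) with ((y2 - c0) * (y2 ^ 2 + y2 * c0 + c0 ^ 2)) by ring.
    rewrite Hyc, Rabs_mult, Rabs_Ropp.
    assert (Rabs (y2 ^ 2 + y2 * c0 + c0 ^ 2) <= 7 * a2 ^ 2).
    { eapply Rle_trans; [apply Rabs_triang|].
      eapply Rle_trans; [apply Rplus_le_compat_r, Rabs_triang|].
      rewrite Rabs_mult, <- !RPow_abs. fold a2.
      assert (Rabs c0 <= 2 * a2) by lra.
      assert (Rabs c0 ^ 2 <= (2 * a2) ^ 2) by (apply pow_incr; lra).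
      assert (a2 * Rabs c0 <= a2 * (2 * a2)) by (apply Rmult_le_compat_l; lra).
      simpl in *. lra. }
    assert (Rabs e * Rabs (y2 ^ 2 + y2 * c0 + c0 ^ 2) <= 3 * a2 / 100 * (7 * a2 ^ 2)).
    { apply Rmult_le_compat; auto. apply Rabs_pos. }
    eapply Rle_trans; [eassumption|]. replace (3 * a2 / 100 * (7 * a2 ^ 2)) with (21 / 100 * a2 ^ 3) by field.
    lra. }
  assert (Hm : 291 / 100 * P <= Rabs (3 * y0 * y1 * c0)).
  { rewrite !Rabs_mult, (Rabs_pos_eq 3) by lra. fold a0 a1.
    replace (291 / 100 * P) with (3 * a0 * a1 * (97 / 100 * a2)) by (unfold P; field).
    apply Rmult_le_compat_l; [apply Rmult_le_pos; [apply Rmult_le_pos|]; lra|]. lra. }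
  assert (HS : 2 * P <= Rabs (y0 ^ 3 + y1 ^ 3 + y2 ^ 3 + y3 ^ 3 + y4 ^ 3 + y5 ^ 3)).
  { replace (y0 ^ 3 + y1 ^ 3 + y2 ^ 3 + y3 ^ 3 + y4 ^ 3 + y5 ^ 3)
      with (3 * y0 * y1 * c0 + (y2 ^ 3 - c0 ^ 3) + y3 ^ 3 + y4 ^ 3 + y5 ^ 3) by (unfold c0; ring).
    apply abs_lower.
    apply Rabs_le_inv' in HQ, C3, C4, C5.
    destruct (abs_ge_inv _ _ Hm); lra. }
  replace (f y0 + f y1 + f y2 + f y3 + f y4 + f y5)
    with ((f y0 + f y1 + f c0) + (f y2 - f c0) + f y3 + f y4 + f y5) by ring.
  apply Rabs_le_inv' in HT1, HT2, F3, F4, F5.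
  assert (Cg * P <= Cg * (Rabs (y0 ^ 3 + y1 ^ 3 + y2 ^ 3 + y3 ^ 3 + y4 ^ 3 + y5 ^ 3) / 2))
    by (apply Rmult_le_compat_l; lra).
  set (Z := Rabs (y0 ^ 3 + y1 ^ 3 + y2 ^ 3 + y3 ^ 3 + y4 ^ 3 + y5 ^ 3)) in *.
  assert (0 <= Cg * Z) by (apply Rmult_le_pos; [lra|unfold Z; apply Rabs_pos]).
  apply Rabs_le. split; lra.
Qed.

Lemma quad (z0 z1 z2 z3 : R) :
  Rabs z1 <= Rabs z0 -> Rabs z2 <= Rabs z0 -> Rabs z3 <= Rabs z0 ->
  Rabs (z0 + z1 + z2 + z3) <= 2 * Rabs z0 ->
  Rabs (f z0 + f z1 + f z2 + f z3) <=
    5 * Cg * (Rabs (z0 + z1) * Rabs (z0 + z2) * Rabs z0)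
    + 16 * Cg * (Rabs (z0 + z1 + z2 + z3) * Rabs z0 ^ 2).
Proof.
  intros H1 H2 H3 HS.
  set (S := z0 + z1 + z2 + z3) in *. set (w := - (z0 + z1 + z2)).
  pose proof (Rabs_pos z0). pose proof (Rabs_pos (z0 + z1)). pose proof (Rabs_pos (z0 + z2)).
  pose proof (Rabs_pos S).
  assert (HA : Rabs (f z0 + f z1 + f z2 + f w) <= 5 * Cg * (Rabs (z0 + z1) * Rabs (z0 + z2) * Rabs z0)).
  { pose proof (Hdd z0 (- (z0 + z1)) (- (z0 + z2))) as Hd.
    replace (z0 + - (z0 + z1) + - (z0 + z2)) with w in Hd by (unfold w; ring).
    replace (z0 + - (z0 + z1)) with (- z1) in Hd by ring.
    replace (z0 + - (z0 + z2)) with (- z2) in Hd by ring.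
    rewrite !Hodd, !Rabs_Ropp in Hd.
    replace (f z0 - - f z1 - - f z2 + f w) with (f z0 + f z1 + f z2 + f w) in Hd by ring.
    eapply Rle_trans; [exact Hd|].
    assert (Rabs (z0 + z1) <= 2 * Rabs z0) by (pose proof (Rabs_triang z0 z1); lra).
    assert (Rabs (z0 + z2) <= 2 * Rabs z0) by (pose proof (Rabs_triang z0 z2); lra).
    replace (Cg * Rabs (z0 + z1) * Rabs (z0 + z2) * (Rabs z0 + Rabs (z0 + z1) + Rabs (z0 + z2)))
      with (Cg * (Rabs (z0 + z1) * Rabs (z0 + z2) * (Rabs z0 + Rabs (z0 + z1) + Rabs (z0 + z2)))) by ring.
    replace (5 * Cg * (Rabs (z0 + z1) * Rabs (z0 + z2) * Rabs z0))
      with (Cg * (Rabs (z0 + z1) * Rabs (z0 + z2) * (5 * Rabs z0))) by ring.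
    apply Rmult_le_compat_l; auto. apply mul3_le; lra. }
  assert (HB : Rabs (f z3 - f w) <= 16 * Cg * (Rabs S * Rabs z0 ^ 2)).
  { eapply Rle_trans; [apply Hlip|].
    replace (z3 - w) with S by (unfold S, w; ring).
    assert (Rabs w <= 3 * Rabs z0).
    { replace w with (z3 - S) by (unfold S, w; ring). pose proof (Rabs_triang z3 (- S)) as TT.
      rewrite Rabs_Ropp in TT. unfold Rminus. lra. }
    pose proof (Rabs_pos w). pose proof (Rabs_pos z3).
    assert ((Rabs z3 + Rabs w) ^ 2 <= (4 * Rabs z0) ^ 2) by (apply pow_incr; lra).
    replace (16 * Cg * (Rabs S * Rabs z0 ^ 2)) with (Cg * (Rabs S * (4 * Rabs z0) ^ 2)) by ring.
    replace (Cg * Rabs S * (Rabs z3 + Rabs w) ^ 2) with (Cg * (Rabs S * (Rabs z3 + Rabs w) ^ 2)) by ring.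
    apply Rmult_le_compat_l; auto. apply Rmult_le_compat_l; auto. }
  replace (f z0 + f z1 + f z2 + f z3) with ((f z0 + f z1 + f z2 + f w) + (f z3 - f w)) by ring.
  eapply Rle_trans; [apply Rabs_triang|]. lra.
Qed.

Lemma case4 (y0 y1 y2 y3 y4 y5 : R) :
  Rabs y1 <= Rabs y0 -> Rabs y2 <= Rabs y1 ->
  Rabs y3 <= Rabs y2 -> Rabs y4 <= Rabs y3 -> Rabs y5 <= Rabs y4 ->
  y0 + y1 + y2 + y3 + y4 + y5 = 0 ->
  Rabs y4 <= Rabs y3 / 100 ->
  Rabs y4 * Rabs y0 ^ 2 <= Rabs (y0 + y1) * Rabs (y0 + y2) * Rabs (y0 + y3) / 100 ->
  Rabs (f y4 + f y5) <= Rabs (f y0 + f y1 + f y2 + f y3) / 100 ->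
  Rabs (f y0 + f y1 + f y2 + f y3 + f y4 + f y5)
    <= (40 * Cg + 2) * Rabs (y0 ^ 3 + y1 ^ 3 + y2 ^ 3 + y3 ^ 3 + y4 ^ 3 + y5 ^ 3).
Proof.
  intros H1 H2 H3 H4 H5 Hsum Ha Hb Hq.
  pose proof (Rabs_pos y0). pose proof (Rabs_pos y1). pose proof (Rabs_pos y2).
  pose proof (Rabs_pos y3). pose proof (Rabs_pos y4). pose proof (Rabs_pos y5).
  set (S := y0 + y1 + y2 + y3).
  assert (HS : Rabs S <= 2 * Rabs y4).
  { replace S with (- (y4 + y5)) by (unfold S; lra). rewrite Rabs_Ropp.
    pose proof (Rabs_triang y4 y5). lra. }
  pose proof (Rabs_pos S).
  pose proof (Rabs_pos (y0 + y1)) as Pd. pose proof (Rabs_pos (y0 + y2)) as Pe.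
  pose proof (Rabs_pos (y0 + y3)) as Ph.
  set (a0 := Rabs y0) in *. set (a4 := Rabs y4) in *.
  set (d := Rabs (y0 + y1)) in *. set (e := Rabs (y0 + y2)) in *. set (h := Rabs (y0 + y3)) in *.
  set (D3 := d * e * h) in *.
  assert (HD3 : 0 <= D3) by (unfold D3; apply Rmult_le_pos; [apply Rmult_le_pos|]; lra).
  assert (HA0 : 0 <= a4 * a0 ^ 2) by (apply Rmult_le_pos; [lra|apply pow2_ge_0]).
  assert (HSa : Rabs S * a0 ^ 2 <= 2 * (a4 * a0 ^ 2)).
  { replace (2 * (a4 * a0 ^ 2)) with ((2 * a4) * a0 ^ 2) by ring.
    apply Rmult_le_compat_r; [apply pow2_ge_0|lra]. }
  assert (Hsum3 : 198 / 100 * a0 <= d + e + h).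
  { assert (Rabs (2 * y0 + S) <= d + e + h).
    { replace (2 * y0 + S) with ((y0 + y1) + (y0 + y2) + (y0 + y3)) by (unfold S; ring).
      eapply Rle_trans; [apply Rabs_triang|]. pose proof (Rabs_triang (y0 + y1) (y0 + y2)) as TT.
      fold d e h. fold d e in TT. lra. }
    pose proof (Rabs_triang (2 * y0 + S) (- S)) as TT. rewrite Rabs_Ropp in TT.
    replace (2 * y0 + S + - S) with (2 * y0) in TT by ring.
    rewrite Rabs_mult, (Rabs_pos_eq 2) in TT by lra. fold a0 in TT. lra. }
  assert (HSz : Rabs S <= 2 * a0) by lra.
  assert (HF4 : Rabs (f y0 + f y1 + f y2 + f y3) <= 11 * Cg * D3).
  { assert (Hkey : forall x y z, 0 <= x -> 0 <= y -> a0 / 2 <= z -> x * y * z = D3 -> x * y * a0 <= 2 * D3).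
    { intros x y z Hx Hy Hz HD. rewrite <- HD.
      replace (2 * (x * y * z)) with (x * y * (2 * z)) by ring.
      apply Rmult_le_compat_l; [apply Rmult_le_pos|]; lra. }
    assert (Hfin : forall X, X <= 2 * D3 ->
        5 * Cg * X + 16 * Cg * (Rabs S * a0 ^ 2) <= 11 * Cg * D3).
    { intros X HX. assert (Cg * X <= Cg * (2 * D3)) by (apply Rmult_le_compat_l; lra).
      assert (Cg * (Rabs S * a0 ^ 2) <= Cg * (2 * (D3 / 100))) by (apply Rmult_le_compat_l; lra).
      assert (0 <= Cg * D3) by (apply Rmult_le_pos; lra). lra. }
    destruct (Rle_or_lt (a0 / 2) h) as [Hh|Hh].
    - pose proof (quad y0 y1 y2 y3 ltac:(unfold a0 in *; lra) ltac:(unfold a0 in *; lra) ltac:(unfold a0 in *; lra) ltac:(unfold a0, S in *; lra)) as Q.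
      fold S a0 d e in Q. eapply Rle_trans; [exact Q|]. apply Hfin.
      apply (Hkey d e h); auto.
    - destruct (Rle_or_lt (a0 / 2) e) as [He|He].
      + pose proof (quad y0 y1 y3 y2 ltac:(unfold a0 in *; lra) ltac:(unfold a0 in *; lra) ltac:(unfold a0 in *; lra)) as Q.
        replace (y0 + y1 + y3 + y2) with S in Q by (unfold S; ring).
        replace (f y0 + f y1 + f y3 + f y2) with (f y0 + f y1 + f y2 + f y3) in Q by ring.
        fold a0 d h in Q. specialize (Q ltac:(lra)).
        eapply Rle_trans; [exact Q|]. apply Hfin.
        apply (Hkey d h e); auto. unfold D3; ring.
      + assert (Hd : a0 / 2 <= d) by lra.
        pose proof (quad y0 y2 y3 y1 ltac:(unfold a0 in *; lra) ltac:(unfold a0 in *; lra) ltac:(unfold a0 in *; lra)) as Q.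
        replace (y0 + y2 + y3 + y1) with S in Q by (unfold S; ring).
        replace (f y0 + f y2 + f y3 + f y1) with (f y0 + f y1 + f y2 + f y3) in Q by ring.
        fold a0 e h in Q. specialize (Q ltac:(lra)).
        eapply Rle_trans; [exact Q|]. apply Hfin.
        apply (Hkey e h d); auto. unfold D3; ring. }
  set (w := - (y0 + y1 + y2)).
  assert (Hw : Rabs w <= 3 * a0).
  { unfold w. rewrite Rabs_Ropp. pose proof (Rabs_triang (y0 + y1) y2) as T1. pose proof (Rabs_triang y0 y1) as T2.
    fold a0 in T2. lra. }
  pose proof (Rabs_pos w).
  assert (E1 : Rabs (3 * (y0 + y1) * (y0 + y2) * S) <= 24 * (a4 * a0 ^ 2)).
  { rewrite !Rabs_mult, (Rabs_pos_eq 3) by lra. fold d e.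
    assert (d <= 2 * a0) by (unfold d; pose proof (Rabs_triang y0 y1) as TT; fold a0 in TT; lra).
    assert (e <= 2 * a0) by (unfold e; pose proof (Rabs_triang y0 y2) as TT; fold a0 in TT; lra).
    replace (24 * (a4 * a0 ^ 2)) with (3 * ((2 * a0) * (2 * a0) * (2 * a4))) by ring.
    replace (3 * d * e * Rabs S) with (3 * (d * e * Rabs S)) by ring.
    apply Rmult_le_compat_l; [lra|]. apply mul3_le; lra. }
  assert (E2 : Rabs (y3 ^ 3 - w ^ 3) <= 26 * (a4 * a0 ^ 2)).
  { replace (y3 ^ 3 - w ^ 3) with (S * (y3 ^ 2 + y3 * w + w ^ 2)) by (unfold S, w; ring).
    rewrite Rabs_mult.
    assert (Rabs (y3 ^ 2 + y3 * w + w ^ 2) <= 13 * a0 ^ 2).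
    { eapply Rle_trans; [apply Rabs_triang|].
      eapply Rle_trans; [apply Rplus_le_compat_r, Rabs_triang|].
      rewrite Rabs_mult, <- !RPow_abs.
      assert (Rabs y3 <= a0) by (unfold a0 in *; lra).
      assert (Rabs y3 ^ 2 <= a0 ^ 2) by (apply pow_incr; lra).
      assert (Rabs w ^ 2 <= (3 * a0) ^ 2) by (apply pow_incr; lra).
      assert (Rabs y3 * Rabs w <= a0 * (3 * a0)) by (apply Rmult_le_compat; lra).
      simpl in *. lra. }
    assert (Rabs S * Rabs (y3 ^ 2 + y3 * w + w ^ 2) <= (2 * a4) * (13 * a0 ^ 2)).
    { apply Rmult_le_compat; auto. apply Rabs_pos. }
    lra. }
  assert (E3 : forall y, Rabs y <= a4 -> Rabs (y ^ 3) <= a4 * a0 ^ 2).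
  { intros y Hy. rewrite cube_abs. replace (Rabs y ^ 3) with (Rabs y * Rabs y ^ 2) by ring.
    pose proof (Rabs_pos y).
    apply Rmult_le_compat; auto. apply pow2_ge_0. apply pow_incr. split; auto. unfold a0, a4 in *; lra. }
  pose proof (E3 y4 (Rle_refl _)) as E4. pose proof (E3 y5 H5) as E5.
  assert (Hm : Rabs (3 * (y0 + y1) * (y0 + y2) * (y0 + y3)) = 3 * D3).
  { rewrite !Rabs_mult, (Rabs_pos_eq 3) by lra. unfold D3, d, e, h. ring. }
  assert (HSc : 2 * D3 <= Rabs (y0 ^ 3 + y1 ^ 3 + y2 ^ 3 + y3 ^ 3 + y4 ^ 3 + y5 ^ 3)).
  { replace (y0 ^ 3 + y1 ^ 3 + y2 ^ 3 + y3 ^ 3 + y4 ^ 3 + y5 ^ 3)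
      with (3 * (y0 + y1) * (y0 + y2) * (y0 + y3) - 3 * (y0 + y1) * (y0 + y2) * S
            + (y3 ^ 3 - w ^ 3) + y4 ^ 3 + y5 ^ 3) by (unfold S, w; ring).
    apply abs_lower.
    apply Rabs_le_inv' in E1, E2, E4, E5.
    assert (Hm' : 3 * D3 <= Rabs (3 * (y0 + y1) * (y0 + y2) * (y0 + y3))) by lra.
    destruct (abs_ge_inv _ _ Hm'); lra. }
  replace (f y0 + f y1 + f y2 + f y3 + f y4 + f y5)
    with ((f y0 + f y1 + f y2 + f y3) + (f y4 + f y5)) by ring.
  eapply Rle_trans; [apply Rabs_triang|].
  set (Z := Rabs (y0 ^ 3 + y1 ^ 3 + y2 ^ 3 + y3 ^ 3 + y4 ^ 3 + y5 ^ 3)) in *.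
  assert (Cg * D3 <= Cg * (Z / 2)) by (apply Rmult_le_compat_l; lra).
  assert (0 <= Cg * Z) by (apply Rmult_le_pos; [lra|unfold Z; apply Rabs_pos]).
  lra.
Qed.

End C.


Lemma core6 (mu : R -> R) (N Cg : R) (x : nat -> R) :
  0 < N -> 0 <= Cg ->
  (forall u, fN mu N (- u) = - fN mu N u) ->
  (forall u v, Rabs (fN mu N u - fN mu N v) <= Cg * Rabs (u - v) * (Rabs u + Rabs v) ^ 2) ->
  (forall p D E, Rabs (fN mu N p - fN mu N (p + D) - fN mu N (p + E) + fN mu N (p + D + E))
    <= Cg * Rabs D * Rabs E * (Rabs p + Rabs D + Rabs E)) ->
  (forall u, Rabs u <= N -> fN mu N u = u ^ 3) ->
  Rabs (x 1%nat) <= Rabs (x 0%nat) -> Rabs (x 2%nat) <= Rabs (x 1%nat) ->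
  Rabs (x 3%nat) <= Rabs (x 2%nat) -> Rabs (x 4%nat) <= Rabs (x 3%nat) ->
  Rabs (x 5%nat) <= Rabs (x 4%nat) ->
  x 0%nat + x 1%nat + x 2%nat + x 3%nat + x 4%nat + x 5%nat = 0 ->
  Omega1 100 x \/
  (Rabs (x 2%nat) <= N / 100 /\
   Rabs (x 2%nat ^ 3 + x 3%nat ^ 3 + x 4%nat ^ 3 + x 5%nat ^ 3) <= Rabs (x 0%nat ^ 3 + x 1%nat ^ 3) / 100)
  \/ Omega3 100 x \/ Omega4 100 N mu x ->
  Rabs (fN mu N (x 0%nat) + fN mu N (x 1%nat) + fN mu N (x 2%nat) + fN mu N (x 3%nat)
        + fN mu N (x 4%nat) + fN mu N (x 5%nat))
  <= (40 * Cg + 2) * Rabs (x 0%nat ^ 3 + x 1%nat ^ 3 + x 2%nat ^ 3 + x 3%nat ^ 3 + x 4%nat ^ 3 + x 5%nat ^ 3).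
Proof.
  intros HN HC Hodd Hlip Hdd Hcube H1 H2 H3 H4 H5 Hs HO.
  destruct HO as [HO|[HO|[HO|HO]]].
  - unfold Omega1, mll in HO. apply (case1 _ Cg); auto.
  - destruct HO as [Ha Hb]. apply (case2 _ Cg HC Hodd Hlip N); auto.
    assert (0 < N / 100) by (unfold Rdiv; apply Rmult_lt_0_compat; lra). lra.
  - unfold Omega3, mll in HO. destruct HO as [Ha Hb]. apply (case3 _ Cg); auto.
  - unfold Omega4, mll in HO. destruct HO as [Ha [Hb Hc]]. apply (case4 _ Cg); auto.
Qed.

Lemma star_sum n xi sigma (F : R -> R) : sorting_perm n xi sigma ->
  rsum n (fun j => F (star n xi sigma j)) = rsum n (fun j => F (xi j)).
Proof.
  intros [Hs1 [Hs2 Hs3]].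
  rewrite (rsum_ext n _ (fun j => F (xi (sigma j)))).
  - apply (rsum_perm n (fun j => F (xi j)) sigma); auto.
  - intros j Hj. unfold star. replace (Nat.ltb j n) with true; auto.
    symmetry. apply Nat.ltb_lt. auto.
Qed.

Lemma star_ord n xi sigma i j : sorting_perm n xi sigma -> (i < j)%nat ->
  Rabs (star n xi sigma j) <= Rabs (star n xi sigma i).
Proof.
  intros [Hs1 [Hs2 Hs3]] Hij. unfold star.
  destruct (Nat.ltb j n) eqn:Ej.
  - apply Nat.ltb_lt in Ej. replace (Nat.ltb i n) with true.
    + apply Hs3; auto.
    + symmetry. apply Nat.ltb_lt. lia.
  - rewrite Rabs_R0. apply Rabs_pos.
Qed.

Theorem mainTheorem2 :
  forall k : nat, (k = 3 \/ k = 4)%nat ->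
  forall K : R, 1 <= K ->
  exists C0 : R, 1 <= C0 /\
  forall (s : R) (mu : R -> R), 1/2 <= s < 1 -> admissible_profile s mu ->
  exists C : R, 0 <= C /\
  forall (N lam : R) (xi : nat -> R), 1 <= N -> 1 <= lam ->
    in_Gamma (k + 2) lam xi ->
    in_Omega (k + 2) C0 K N mu xi ->
    Rabs (Mreal mu N (k + 2) xi) <= C * Rabs (alpha (k + 2) xi).
Proof.
  intros k Hk K HK. exists 100. split; [lra|].
  intros s mu Hs Hadm.
  destruct Hadm as [[d [Hd0 Htow]] [Hev [Hmono [Hpos [Hone Hbig]]]]].
  assert (Ht : tower d) by exact Htow.
  destruct (G2_bound d s Ht Hs) as [Cg [HCg HG]];
    [rewrite Hd0; auto|rewrite Hd0; auto|rewrite Hd0; auto|].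
  exists (40 * Cg + 2). split; [lra|].
  intros N lam xi HN Hlam [_ HG0] [sigma [Hperm HO]].
  assert (HN0 : 0 < N) by lra.
  assert (Hodd : forall u, fN mu N (- u) = - fN mu N u) by (intros; apply fN_odd; auto).
  pose proof (fN_lip mu d N Cg Ht Hd0 HN0 ltac:(lra) HG) as Hlip.
  pose proof (fN_dd mu d N Cg Ht Hd0 HN0 ltac:(lra) HG) as Hdd.
  assert (Hcube : forall u, Rabs u <= N -> fN mu N u = u ^ 3) by (intros; apply fN_cube; auto).
  set (n := (k + 2)%nat) in *.
  set (x := star n xi sigma) in *.
  unfold Mreal, alpha.
  change (rsum n (fun j => mult mu N (xi j) ^ 2 * xi j ^ 3)) with (rsum n (fun j => fN mu N (xi j))).
  rewrite <- (star_sum n xi sigma (fN mu N) Hperm), <- (star_sum n xi sigma (fun t => t ^ 3) Hperm).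
  assert (HG1 : rsum n (fun j => x j) = 0)
    by (rewrite <- HG0; exact (star_sum n xi sigma (fun t => t) Hperm)).
  clear HG0. fold x.
  pose proof (fun i j => star_ord n xi sigma i j Hperm) as Hord. fold x in Hord.
  assert (f0 : fN mu N 0 = 0) by (unfold fN; ring).
  destruct Hk as [Hk|Hk]; subst k; subst n.
  -
    assert (x5 : x 5%nat = 0) by reflexivity.
    cbn [rsum Nat.add] in *.
    pose proof (core6 mu N Cg x HN0 ltac:(lra) Hodd Hlip Hdd Hcube
      (Hord 0 1 ltac:(lia))%nat (Hord 1 2 ltac:(lia))%nat (Hord 2 3 ltac:(lia))%nat
      (Hord 3 4 ltac:(lia))%nat (Hord 4 5 ltac:(lia))%nat) as Hc.
    rewrite x5, f0 in Hc.
    replace (0 + fN mu N (x 0%nat) + fN mu N (x 1%nat) + fN mu N (x 2%nat) + fN mu N (x 3%nat) + fN mu N (x 4%nat))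
      with (fN mu N (x 0%nat) + fN mu N (x 1%nat) + fN mu N (x 2%nat) + fN mu N (x 3%nat) + fN mu N (x 4%nat) + 0) by ring.
    replace (0 + x 0%nat ^ 3 + x 1%nat ^ 3 + x 2%nat ^ 3 + x 3%nat ^ 3 + x 4%nat ^ 3)
      with (x 0%nat ^ 3 + x 1%nat ^ 3 + x 2%nat ^ 3 + x 3%nat ^ 3 + x 4%nat ^ 3 + 0 ^ 3) by ring.
    apply Hc; [lra|].
    destruct HO as [HO|[HO|[HO|HO]]]; [left; exact HO| |right; right; left; exact HO|].
    + right; left. unfold Omega2, mll in HO. destruct HO as [_ [_ [Ha [_ Hb]]]].
      split; [exact Ha|]. cbn [rsum Nat.add Nat.sub] in Hb.
      replace (x 2%nat ^ 3 + x 3%nat ^ 3 + x 4%nat ^ 3 + 0 ^ 3) with (0 + x 2%nat ^ 3 + x 3%nat ^ 3 + x 4%nat ^ 3) by ring.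
      exact Hb.
    + right; right; right. exact HO.
  -
    cbn [rsum Nat.add] in *.
    pose proof (core6 mu N Cg x HN0 ltac:(lra) Hodd Hlip Hdd Hcube
      (Hord 0 1 ltac:(lia))%nat (Hord 1 2 ltac:(lia))%nat (Hord 2 3 ltac:(lia))%nat
      (Hord 3 4 ltac:(lia))%nat (Hord 4 5 ltac:(lia))%nat) as Hc.
    replace (0 + fN mu N (x 0%nat) + fN mu N (x 1%nat) + fN mu N (x 2%nat) + fN mu N (x 3%nat) + fN mu N (x 4%nat) + fN mu N (x 5%nat))
      with (fN mu N (x 0%nat) + fN mu N (x 1%nat) + fN mu N (x 2%nat) + fN mu N (x 3%nat) + fN mu N (x 4%nat) + fN mu N (x 5%nat)) by ring.
    replace (0 + x 0%nat ^ 3 + x 1%nat ^ 3 + x 2%nat ^ 3 + x 3%nat ^ 3 + x 4%nat ^ 3 + x 5%nat ^ 3)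
      with (x 0%nat ^ 3 + x 1%nat ^ 3 + x 2%nat ^ 3 + x 3%nat ^ 3 + x 4%nat ^ 3 + x 5%nat ^ 3) by ring.
    apply Hc; [lra|].
    destruct HO as [HO|[HO|[HO|HO]]]; [left; exact HO| |right; right; left; exact HO|].
    + right; left. unfold Omega2, mll in HO. destruct HO as [_ [_ [Ha [_ Hb]]]].
      split; [exact Ha|].
      cbn [rsum Nat.add Nat.sub] in Hb.
      replace (x 2%nat ^ 3 + x 3%nat ^ 3 + x 4%nat ^ 3 + x 5%nat ^ 3) with (0 + x 2%nat ^ 3 + x 3%nat ^ 3 + x 4%nat ^ 3 + x 5%nat ^ 3) by ring.
      exact Hb.
    + right; right; right. exact HO.
Qed.
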